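(* Let $d\ge3$ and $\overrightarrow{w}\in(0,\infty)^d$. Suppose there is a partition of $\{1,\dots,d\}$ into pairwise disjoint nonempty sets $A,B,C$ such that, with $a=\sum_{i\in A}w_i$, $b=\sum_{i\in B}w_i$, $c=\sum_{i\in C}w_i$, one has $a+b+c\ge 2\max\{a,b,c\}$. Then there exists a random vector $\overrightarrow{U}=(U_1,\dots,U_d)$ with each $U_i$ uniform on $[0,1]$ such that $\sum_{i=1}^d w_iU_i=\frac12\sum_{i=1}^dw_i$ almost surely. *)

(* Defs.v *)
From Stdlib Require Import Reals.
Open Scope R_scope.

Fixpoint fsum (n : nat) (f : nat -> R) : R :=
  match n with
  | O => 0
  | S m => fsum m f + f m
  end.

Record ProbSpace := {
  Omega : Type;
  F : (Omega -> Prop) -> Prop;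
  P : (Omega -> Prop) -> R;
  F_full : F (fun _ => True);
  F_compl : forall E, F E -> F (fun x => ~ E x);
  F_cunion : forall E : nat -> Omega -> Prop,
      (forall n, F (E n)) -> F (fun x => exists n, E n x);
  P_nonneg : forall E, F E -> 0 <= P E;
  P_full : P (fun _ => True) = 1;
  P_sigma_add : forall E : nat -> Omega -> Prop,
      (forall n, F (E n)) ->
      (forall n m x, n <> m -> E n x -> E m x -> False) ->
      infinite_sum (fun n => P (E n)) (P (fun x => exists n, E n x))
}.

Definition random_variable (S : ProbSpace) (X : Omega S -> R) : Prop :=
  forall t : R, F S (fun x => X x <= t).

(* X is uniformly distributed on [0,1]: P(X <= t) = t for all t in [0,1]
   (together with P(X <= 0) = 0 and P(X <= 1) = 1 this determines the law). *)
Definition uniform01 (S : ProbSpace) (X : Omega S -> R) : Prop :=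
  random_variable S X /\
  (forall t : R, 0 <= t <= 1 -> P S (fun x => X x <= t) = t).

Definition block_weight (d : nat) (w : nat -> R) (A : nat -> bool) : R :=
  fsum d (fun i => if A i then w i else 0).

(* Main.v *)
Require Import Defs.
From Stdlib Require Import Reals Lra Lia.
From mathcomp Require Import ssreflect ssrbool.

Module MC.
From mathcomp Require Import all_boot all_algebra.
From mathcomp Require Import all_classical all_reals all_analysis.
From mathcomp Require Import Rstruct Rstruct_topology.
Import order.Order.TTheory GRing.Theory Num.Theory.
Import numFieldNormedType.Exports.
Local Open Scope classical_set_scope.

Definition I01 : set R := fun u => (0 <= u <= 1)%coqR.
Definition lam := (@lebesgue_measure R).
Definition Fm (E : R -> Prop) : Prop := measurable (E `&` I01 : set (measurableTypeR R)).
Definition Pm (E : R -> Prop) : R := fine (lam (E `&` I01)).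

Lemma cc_eq (l r : R) : (fun u => (l <= u <= r)%coqR) = [set` (`[l, r])%R].
Proof.
apply/funext => u; apply/propext; rewrite /= in_itv /=; split.
- by move=> [/RleP -> /RleP ->].
- by move=> /andP[/RleP ? /RleP ?].
Qed.

Lemma oo_eq (l r : R) : (fun u => (l < u < r)%coqR) = [set` (`]l, r[)%R].
Proof.
apply/funext => u; apply/propext; rewrite /= in_itv /=; split.
- by move=> [/RltP -> /RltP ->].
- by move=> /andP[/RltP ? /RltP ?].
Qed.

Lemma I01_meas : measurable (I01 : set (measurableTypeR R)).
Proof. rewrite /I01 cc_eq; exact: measurable_itv. Qed.

Lemma lam_cc (l r : R) : (l <= r)%coqR -> lam (fun u => (l <= u <= r)%coqR) = (r - l)%:E.
Proof.
move=> H; rewrite cc_eq /lam lebesgue_measure_itv /=.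
case: ifP => // /negbT; rewrite lte_fin -leNgt => /RleP H2.
have -> : r = l by lra.
by rewrite subrr.
Qed.

Lemma lam_oo (l r : R) : (l <= r)%coqR -> lam (fun u => (l < u < r)%coqR) = (r - l)%:E.
Proof.
move=> H; rewrite oo_eq /lam lebesgue_measure_itv /=.
case: ifP => // /negbT; rewrite lte_fin -leNgt => /RleP H2.
have -> : r = l by lra.
by rewrite subrr.
Qed.

Lemma lam_I01 : lam I01 = 1%:E.
Proof. rewrite /I01 lam_cc; first by rewrite subr0. lra. Qed.

Lemma Fm_full : Fm (fun _ => True).
Proof.
rewrite /Fm; have -> : (fun _ : R => True) `&` I01 = I01.
  by apply/funext => u; apply/propext; split => [[]|].
exact: I01_meas.
Qed.

Lemma Fm_compl E : Fm E -> Fm (fun x => ~ E x).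
Proof.
rewrite /Fm => H.
have -> : (fun x => ~ E x) `&` I01 = I01 `\` (E `&` I01).
  apply/funext => u; apply/propext; split.
  - by move=> [h1 h2]; split => // [[]].
  - move=> [h1 h2]; split => // h3; exact: h2.
exact: measurableD I01_meas H.
Qed.

Lemma Fm_cunion (E : nat -> R -> Prop) : (forall n, Fm (E n)) -> Fm (fun x => exists n, E n x).
Proof.
rewrite /Fm => H.
have -> : (fun x => exists n, E n x) `&` I01 = \bigcup_n (E n `&` I01).
  apply/funext => u; apply/propext; split.
  - by move=> [[n hn] h]; exists n.
  - by move=> [n _ [hn h]]; split => //; exists n.
exact: bigcupT_measurable.
Qed.

Lemma Pm_ge0 E : (0 <= Pm E)%coqR.
Proof. apply/RleP; apply: fine_ge0; exact: measure_ge0. Qed.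

Lemma Pm_full : Pm (fun _ => True) = 1%coqR.
Proof.
rewrite /Pm; have -> : (fun _ : R => True) `&` I01 = I01.
  by apply/funext => u; apply/propext; split => [[]|].
by rewrite lam_I01.
Qed.

Lemma sum_fE (f : nat -> R) n : sum_f_R0 f n = (\sum_(0 <= k < n.+1) f k)%R.
Proof.
elim: n => [|n IH] /=; first by rewrite big_nat1.
by rewrite IH RplusE (big_nat_recr n.+1).
Qed.

Lemma Pm_sigma (E : nat -> R -> Prop) : (forall n, Fm (E n)) ->
  (forall n m x, n <> m -> E n x -> E m x -> False) ->
  infinite_sum (fun n => Pm (E n)) (Pm (fun x => exists n, E n x)).
Proof.
move=> HF Hd.
pose G := fun n => E n `&` I01.
have HG : forall n, measurable (G n : set (measurableTypeR R)) by move=> n; exact: HF.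
have Ht : trivIset setT G.
  move=> i j _ _ [x [[Ei _] [Ej _]]].
  case: (eqVneq i j) => // /eqP ne; exfalso; exact: (Hd i j x ne Ei Ej).
have Hu : (fun x => exists n, E n x) `&` I01 = \bigcup_n G n.
  apply/funext => u; apply/propext; split.
  - by move=> [[n hn] h]; exists n.
  - by move=> [n _ [hn h]]; split => //; exists n.
have Hcv := measure_sigma_additive (mu := lam) HG Ht.
have HUm : measurable (\bigcup_n G n : set (measurableTypeR R)) by exact: bigcupT_measurable.
have Hfin : forall A : set (measurableTypeR R), measurable A -> A `<=` I01 -> lam A \is a fin_num.
  move=> A mA sA; rewrite ge0_fin_numE; last exact: measure_ge0.
  apply: (le_lt_trans (le_measure _ _ _ sA)); rewrite ?inE //; first exact: I01_meas.
  by change (lam I01 < +oo)%E; rewrite lam_I01 ltry.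
have HUf : lam (\bigcup_n G n) \is a fin_num.
  by apply: Hfin => // x [n _ [_ h]].
have HGf : forall i, lam (G i) \is a fin_num by move=> i; apply: Hfin => // x [].
rewrite /Pm Hu.
have Hcv' : (fun n => \sum_(0 <= i < n) lam (G i))%R @ \oo --> (fine (lam (\bigcup_n G n)))%:E.
  by rewrite fineK.
have Hc2 := @fine_cvg R nat \oo _ _ _ Hcv'.
move=> eps Heps.
have /RltP Heps' := Heps.
have Hc3 := Hc2 eventually_filter.

have Hc4 := (cvgrPdist_lt _ _).1 Hc3 eps Heps'.
have [N _ HN] := Hc4.
exists N => n Hn.
rewrite RdistE sum_fE distrC.
have Hn1 : (N <= n.+1)%N by apply/ssrnat.leP; lia.
have := HN n.+1 Hn1; rewrite /= sum_fine; first by move/RltP.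
move=> i _; exact: HGf.
Qed.

Definition PS : ProbSpace := {|
  Omega := R; F := Fm; P := Pm;
  F_full := Fm_full; F_compl := Fm_compl; F_cunion := Fm_cunion;
  P_nonneg := fun E _ => Pm_ge0 E; P_full := Pm_full; P_sigma_add := Pm_sigma |}.

Lemma Pm_cc (E : R -> Prop) l r : (0 <= l <= r /\ r <= 1)%coqR ->
  (forall u, (0 <= u <= 1)%coqR -> (E u <-> (l <= u <= r)%coqR)) ->
  Fm E /\ Pm E = (r - l)%coqR.
Proof.
move=> Hlr HE.
have He : E `&` I01 = (fun u => (l <= u <= r)%coqR).
  apply/funext => u; apply/propext; split.
  - by move=> [h1 h2]; apply/HE.
  - move=> h; have h2 : (0 <= u <= 1)%coqR by lra.
    by split => //; apply/HE.
rewrite /Fm /Pm He; split.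
  by rewrite cc_eq; exact: measurable_itv.
rewrite lam_cc /=; [by rewrite RminusE | lra].
Qed.

Lemma Pm_co (E : R -> Prop) l r : (0 <= l <= r /\ r <= 1)%coqR ->
  (forall u, (0 <= u <= 1)%coqR -> (E u <-> ~ (l < u < r)%coqR)) ->
  Fm E /\ Pm E = (1 - (r - l))%coqR.
Proof.
move=> Hlr HE.
have He : E `&` I01 = I01 `\` (fun u => (l < u < r)%coqR).
  apply/funext => u; apply/propext; split.
  - by move=> [h1 h2]; split => //; apply/HE.
  - by move=> [h1 h2]; split => //; apply/HE.
have Hm : measurable ((fun u => (l < u < r)%coqR) : set (measurableTypeR R)).
  by rewrite oo_eq; exact: measurable_itv.
rewrite /Fm /Pm He; split.
  exact: measurableD I01_meas Hm.
have -> : lam (I01 `\` (fun u => (l < u < r)%coqR)) =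
    (lam I01 - lam (I01 `&` (fun u => (l < u < r)%coqR)))%E.
  rewrite /lam measureD //; first exact: I01_meas.
  by change (lam I01 < +oo)%E; rewrite lam_I01 ltry.
have -> : I01 `&` (fun u => (l < u < r)%coqR) = (fun u => (l < u < r)%coqR).
  apply/funext => u; apply/propext; split; first by case.
  move=> h; split => //; rewrite /I01; lra.
change (fine (lam I01 - lam (fun u => (l < u < r)%coqR))%E = (1 - (r - l))%coqR).
rewrite lam_I01 lam_oo; last lra.
by rewrite -EFinB /= !RminusE.
Qed.

Lemma Fm_empty (E : R -> Prop) : (forall u, (0 <= u <= 1)%coqR -> ~ E u) -> Fm E.
Proof.
move=> HE; rewrite /Fm.
have -> : E `&` I01 = set0.
  apply/funext => u; apply/propext; split => // [[h1 h2]]; exact: (HE u h2 h1).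
exact: measurable0.
Qed.

Lemma Fm_all (E : R -> Prop) : (forall u, (0 <= u <= 1)%coqR -> E u) -> Fm E /\ Pm E = 1%coqR.
Proof.
move=> HE; rewrite /Fm /Pm.
have -> : E `&` I01 = I01.
  apply/funext => u; apply/propext; split; first by case.
  by move=> h; split => //; apply: HE.
split; first exact: I01_meas.
by rewrite lam_I01.
Qed.

End MC.
Import MC.
Open Scope R_scope.
Locate "<=".
Check (fun d => (3 <= d)%nat).

Lemma div_le (a k t : R) : 0 < k -> (a / k <= t <-> a <= k * t).
Proof.
move=> Hk; split => H.
- have -> : a = k * (a / k) by field; lra.
  apply Rmult_le_compat_l; lra.
- have -> : t = (k * t) / k by field; lra.
  unfold Rdiv; apply Rmult_le_compat_r; [left; apply Rinv_0_lt_compat; lra | lra].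
Qed.

Lemma div_ge (t a k : R) : 0 < k -> (t <= a / k <-> k * t <= a).
Proof.
move=> Hk; split => H.
- have -> : a = k * (a / k) by field; lra.
  apply Rmult_le_compat_l; lra.
- have -> : t = (k * t) / k by field; lra.
  unfold Rdiv; apply Rmult_le_compat_r; [left; apply Rinv_0_lt_compat; lra | lra].
Qed.

Lemma div_ge0 (a k : R) : 0 < k -> 0 <= a -> 0 <= a / k.
Proof. move=> Hk Ha; unfold Rdiv; apply Rmult_le_pos; [lra | left; apply Rinv_0_lt_compat; lra]. Qed.

Lemma unif_of (V : R -> R) :
  (forall u, 0 <= u <= 1 -> 0 <= V u <= 1) ->
  (forall t, 0 <= t <= 1 -> Fm (fun u => V u <= t) /\ Pm (fun u => V u <= t) = t) ->
  uniform01 PS (fun u => V u).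
Proof.
move=> Hb Ht; split.
- move=> t /=.
  destruct (Rlt_le_dec t 0) as [h|h].
    apply: Fm_empty => u hu hV; have := Hb u hu; lra.
  destruct (Rle_lt_dec t 1) as [h'|h'].
    by case: (Ht t (conj h h')).
  by case: (Fm_all (fun u => V u <= t)) => // u hu; have := Hb u hu; lra.
- move=> t h; exact: (proj2 (Ht t h)).
Qed.

Lemma unif_id : uniform01 PS (fun u => u).
Proof.
apply: (unif_of (fun u => u)) => [u hu | t ht]; first lra.
have [h1 h2] := Pm_cc (fun u => u <= t) 0 t ltac:(lra) ltac:(move=> u hu; lra).
split => //; lra.
Qed.

Lemma unif_opp : uniform01 PS (fun u => 1 - u).
Proof.
apply: (unif_of (fun u => 1 - u)) => [u hu | t ht]; first lra.
have [h1 h2] := Pm_cc (fun u => 1 - u <= t) (1 - t) 1 ltac:(lra) ltac:(move=> u hu; lra).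
split => //; lra.
Qed.


Definition Kf x y z := x*y + y*z + z*x.
Definition p1f x y z := y*z/Kf x y z.
Definition q1f x y z := x*(y+z)/Kf x y z.
Definition p2f x y z := y*(x+z)/Kf x y z.
Definition q2f x y z := z*x/Kf x y z.
Definition t2f x y z := x*y/Kf x y z.
Definition kf x y z := z*(x+y)/Kf x y z.

Lemma K_pos x y z : 0 < x -> 0 < y -> 0 < z -> 0 < Kf x y z.
Proof. unfold Kf; nra. Qed.

Lemma pos_facts x y z : 0 < x -> 0 < y -> 0 < z ->
  0 < p1f x y z /\ 0 < q1f x y z /\ 0 < p2f x y z /\ 0 < q2f x y z /\ 0 < t2f x y z /\ 0 < kf x y z.
Proof.
move=> hx hy hz; have HK := K_pos x y z hx hy hz.
unfold p1f, q1f, p2f, q2f, t2f, kf; repeat split; apply Rdiv_lt_0_compat; nra.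
Qed.

Lemma eq_facts x y z : 0 < x -> 0 < y -> 0 < z ->
  q1f x y z = 1 - p1f x y z /\ q2f x y z = 1 - p2f x y z /\ kf x y z = 1 - t2f x y z /\
  p2f x y z = p1f x y z + t2f x y z.
Proof.
move=> hx hy hz; have HK := K_pos x y z hx hy hz.
unfold p1f, q1f, p2f, q2f, t2f, kf in *; unfold Kf in *.
repeat split; field; lra.
Qed.

Definition Xn x y z (u : R) :=
  if Rle_dec u (p1f x y z) then u / p1f x y z else (1 - u) / q1f x y z.
Definition Yn x y z (u : R) :=
  if Rle_dec u (p2f x y z) then 1 - u / p2f x y z else 1 - (1 - u) / q2f x y z.
Definition Zn x y z (u : R) :=
  if Rle_dec u (p1f x y z) then (p1f x y z - u) / kf x y z
  else if Rle_dec u (p2f x y z) then (u - p1f x y z) / t2f x y z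
  else 1 + (p2f x y z - u) / kf x y z.

Lemma sum_id x y z u : 0 < x -> 0 < y -> 0 < z ->
  (y+z) * Xn x y z u + (x+z) * Yn x y z u + (x+y) * Zn x y z u = x + y + z.
Proof.
move=> hx hy hz; have HK := K_pos x y z hx hy hz.
have [_ [_ [_ [_ [Ht2 _]]]]] := pos_facts x y z hx hy hz.
have [_ [_ [_ Hp2]]] := eq_facts x y z hx hy hz.
unfold Xn, Yn, Zn.
destruct (Rle_dec u (p1f x y z)); destruct (Rle_dec u (p2f x y z));
  cbv beta iota delta [is_left];
  first [exfalso; lra | unfold p1f, q1f, p2f, q2f, t2f, kf, Kf in *; field; repeat split; nra].
Qed.

Lemma tent_unif p q : 0 < p -> 0 < q -> q = 1 - p ->
  uniform01 PS (fun u => if Rle_dec u p then u / p else (1 - u) / q).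
Proof.
move=> hp hq hpq.
apply: (unif_of (fun u => if Rle_dec u p then u / p else (1 - u) / q)).
- move=> u hu; destruct (Rle_dec u p); cbv beta iota delta [is_left]; split.
  + apply: div_ge0; lra.
  + apply/div_le; lra.
  + apply: div_ge0; lra.
  + apply/div_le; lra.
- move=> t ht.
  have Hpt : 0 <= p * t by nra.
  have Hqt : 0 <= q * t by nra.
  have [h1 h2] := Pm_co (fun u => (if Rle_dec u p then u / p else (1 - u) / q) <= t)
     (p * t) (1 - q * t) ltac:(subst q; nra) ltac:(move=> u hu; cbv beta; destruct (Rle_dec u p);
        cbv beta iota delta [is_left]; rewrite div_le //; subst q; nra).
  split => //; rewrite h2; subst q; ring.
Qed.

Lemma vtent_unif p q : 0 < p -> 0 < q -> q = 1 - p ->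
  uniform01 PS (fun u => if Rle_dec u p then 1 - u / p else 1 - (1 - u) / q).
Proof.
move=> hp hq hpq.
apply: (unif_of (fun u => if Rle_dec u p then 1 - u / p else 1 - (1 - u) / q)).
- move=> u hu; destruct (Rle_dec u p); cbv beta iota delta [is_left].
  + have := div_ge0 u p hp ltac:(lra); have := proj2 (div_le u p 1 hp) ltac:(lra); lra.
  + have := div_ge0 (1 - u) q hq ltac:(lra); have := proj2 (div_le (1 - u) q 1 hq) ltac:(lra); lra.
- move=> t ht.
  have Hpt : 0 <= p * (1 - t) by nra.
  have Hqt : 0 <= q * (1 - t) by nra.
  have HE : forall u, 0 <= u <= 1 -> ((if Rle_dec u p then 1 - u / p else 1 - (1 - u) / q) <= t
      <-> p * (1 - t) <= u <= 1 - q * (1 - t)).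
  { move=> u hu; destruct (Rle_dec u p); cbv beta iota delta [is_left].
    - have [D1 D2] := div_ge (1 - t) u p hp.
      split => H; [have := D1 ltac:(lra) | have := D2 ltac:(lra)]; subst q; nra.
    - have [D1 D2] := div_ge (1 - t) (1 - u) q hq.
      split => H; [have := D1 ltac:(lra) | have := D2 ltac:(lra)]; subst q; nra. }
  have [h1 h2] := Pm_cc (fun u => (if Rle_dec u p then 1 - u / p else 1 - (1 - u) / q) <= t)
     (p * (1 - t)) (1 - q * (1 - t)) ltac:(subst q; nra) HE.
  split => //; rewrite h2; subst q; ring.
Qed.

Definition Zf p1 t2 p2 k (u : R) :=
  if Rle_dec u p1 then (p1 - u) / k
  else if Rle_dec u p2 then (u - p1) / t2 else 1 + (p2 - u) / k.

Ltac dtac a b c h := let D1 := fresh "D" in let D2 := fresh "D" in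
  have [D1 D2] := div_le a b c h;
  split => H; [have := D1 ltac:(nra) | have := D2 ltac:(nra)]; nra.

Lemma z_unif p1 t2 p2 k : 0 < p1 -> 0 < t2 -> 0 < k -> k = 1 - t2 -> p2 = p1 + t2 -> p2 < 1 ->
  uniform01 PS (fun u => Zf p1 t2 p2 k u).
Proof.
move=> h1 h2 hk ek e2 hp2.
apply: (unif_of (Zf p1 t2 p2 k)).
- move=> u hu; rewrite /Zf; destruct (Rle_dec u p1); [|destruct (Rle_dec u p2)];
    cbv beta iota delta [is_left].
  + have := div_ge0 (p1 - u) k hk ltac:(lra); have := proj2 (div_le (p1 - u) k 1 hk) ltac:(lra); lra.
  + have := div_ge0 (u - p1) t2 h2 ltac:(lra); have := proj2 (div_le (u - p1) t2 1 h2) ltac:(lra); lra.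
  + have := proj2 (div_le (p2 - u) k 0 hk) ltac:(lra).
    have := proj2 (div_ge (-1) (p2 - u) k hk) ltac:(lra); lra.
- move=> t ht.
  have Ht2 : 0 <= t2 * t by nra.
  have Ht2' : t2 * t <= t2 by nra.
  have Hkt : 0 <= k * t by nra.
  have Hkt' : k * t <= k by nra.
  destruct (Rlt_le_dec (k * t) p1) as [hA|hB].
  + have HE : forall u, 0 <= u <= 1 -> (Zf p1 t2 p2 k u <= t <-> p1 - k * t <= u <= p1 + t2 * t).
    { move=> u hu; rewrite /Zf; destruct (Rle_dec u p1); [|destruct (Rle_dec u p2)];
        cbv beta iota delta [is_left].
      - dtac (p1 - u) k t hk.
      - dtac (u - p1) t2 t h2.
      - have [D1 D2] := div_le (p2 - u) k (t - 1) hk.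
        split => H.
        + have := D1 ltac:(lra); nra.
        + nra. }
    have [hh1 hh2] := Pm_cc (fun u => Zf p1 t2 p2 k u <= t) (p1 - k * t) (p1 + t2 * t)
      ltac:(nra) HE.
    split => //; rewrite hh2; subst k; ring.
  + have HE : forall u, 0 <= u <= 1 -> (Zf p1 t2 p2 k u <= t <->
        ~ (p1 + t2 * t < u < p2 + k * (1 - t))).
    { move=> u hu; rewrite /Zf; destruct (Rle_dec u p1); [|destruct (Rle_dec u p2)];
        cbv beta iota delta [is_left].
      - have Hz := proj2 (div_le (p1 - u) k t hk) ltac:(nra).
        split => H; [nra | done].
      - have [D1 D2] := div_le (u - p1) t2 t h2.
        split => H.
        + have := D1 H; nra.
        + apply: D2; nra.
      - have [D1 D2] := div_le (p2 - u) k (t - 1) hk.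
        split => H.
        + have := D1 ltac:(lra); nra.
        + have : p2 - u <= k * (t - 1) by nra.
          move=> /D2; lra. }
    have [hh1 hh2] := Pm_co (fun u => Zf p1 t2 p2 k u <= t) (p1 + t2 * t) (p2 + k * (1 - t))
      ltac:(subst; nra) HE.
    split => //; rewrite hh2; subst k p2; ring.
Qed.


Lemma fsum_ext n f g : (forall i, (i < n)%nat -> f i = g i) -> fsum n f = fsum n g.
Proof.
elim: n => [|n IH] H //=.
rewrite IH; [rewrite H //; lia | move=> i hi; apply: H; lia].
Qed.

Lemma fsum_blocks d w (A B C : nat -> bool) (al be ga : R) :
  (forall i, (i < d)%nat ->
     (A i = true /\ B i = false /\ C i = false) \/
     (A i = false /\ B i = true /\ C i = false) \/
     (A i = false /\ B i = false /\ C i = true)) ->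
  fsum d (fun i => w i * (if A i then al else if B i then be else ga)) =
  block_weight d w A * al + block_weight d w B * be + block_weight d w C * ga.
Proof.
rewrite /block_weight.
elim: d => [|n IH] H /=; first ring.
rewrite IH; last by move=> i hi; apply: H; lia.
have := H n ltac:(lia).
move=> [[-> [-> ->]] | [[-> [-> ->]] | [-> [-> ->]]]]; ring.
Qed.

Lemma finish d w (A B C : nat -> bool) (VA VB VC : R -> R) :
  (forall i, (i < d)%nat ->
     (A i = true /\ B i = false /\ C i = false) \/
     (A i = false /\ B i = true /\ C i = false) \/
     (A i = false /\ B i = false /\ C i = true)) ->
  uniform01 PS VA -> uniform01 PS VB -> uniform01 PS VC ->
  (forall u, block_weight d w A * VA u + block_weight d w B * VB u + block_weight d w C * VC u =
     / 2 * (block_weight d w A + block_weight d w B + block_weight d w C)) ->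
  exists (S : ProbSpace) (U : nat -> Omega S -> R),
    (forall i, (i < d)%nat -> uniform01 S (U i)) /\
    F S (fun x => fsum d (fun i => w i * U i x) = / 2 * fsum d w) /\
    P S (fun x => fsum d (fun i => w i * U i x) = / 2 * fsum d w) = 1.
Proof.
move=> Hp HA HB HC Hs.
exists PS, (fun i (u : R) => if A i then VA u else if B i then VB u else VC u).
have Hw : fsum d w = block_weight d w A + block_weight d w B + block_weight d w C.
  have := fsum_blocks d w A B C 1 1 1 Hp; rewrite !Rmult_1_r => <-.
  apply: fsum_ext => i _; case: (A i); case: (B i); ring.
split.
  move=> i hi; have := Hp i hi.
  by move=> [[HA' _] | [[HA' [HB' _]] | [HA' [HB' _]]]]; rewrite ?HA' ?HB'.
have Hall : forall u : R, fsum d (fun i => w i * (if A i then VA u else if B i then VB u else VC u))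
   = / 2 * fsum d w.
  move=> u; rewrite (fsum_blocks d w A B C (VA u) (VB u) (VC u) Hp) Hw; exact: Hs.
have [h1 h2] := Fm_all (fun x => fsum d (fun i => w i * (if A i then VA x else if B i then VB x else VC x)) = / 2 * fsum d w) (fun u _ => Hall u).
by split.
Qed.

Lemma choose_V (a b c : R) : a + b + c >= 2 * Rmax a (Rmax b c) ->
  exists VA VB VC : R -> R, uniform01 PS VA /\ uniform01 PS VB /\ uniform01 PS VC /\
    forall u, a * VA u + b * VB u + c * VC u = / 2 * (a + b + c).
Proof.
move=> Hm.
have h1 := Rmax_l a (Rmax b c).
have h2 := Rmax_r a (Rmax b c).
have h3 := Rmax_l b c.
have h4 := Rmax_r b c.
destruct (Req_dec a (b + c)) as [ea|na].
  exists (fun u => u), (fun u => 1 - u), (fun u => 1 - u).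
  split; [exact: unif_id | split; [exact: unif_opp | split; [exact: unif_opp|]]].
  move=> u; rewrite ea; field.
destruct (Req_dec b (a + c)) as [eb|nb].
  exists (fun u => 1 - u), (fun u => u), (fun u => 1 - u).
  split; [exact: unif_opp | split; [exact: unif_id | split; [exact: unif_opp|]]].
  move=> u; rewrite eb; field.
destruct (Req_dec c (a + b)) as [ec|nc].
  exists (fun u => 1 - u), (fun u => 1 - u), (fun u => u).
  split; [exact: unif_opp | split; [exact: unif_opp | split; [exact: unif_id|]]].
  move=> u; rewrite ec; field.
pose x := (b + c - a) / 2.
pose y := (a + c - b) / 2.
pose z := (a + b - c) / 2.
have hx : 0 < x by rewrite /x; lra.
have hy : 0 < y by rewrite /y; lra.
have hz : 0 < z by rewrite /z; lra.
have [P1 [Q1 [P2 [Q2 [T2 K2]]]]] := pos_facts x y z hx hy hz.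
have [E1 [E2 [E3 E4]]] := eq_facts x y z hx hy hz.
exists (Xn x y z), (Yn x y z), (Zn x y z).
split; [exact: (tent_unif (p1f x y z) (q1f x y z) P1 Q1 E1)|].
split; [exact: (vtent_unif (p2f x y z) (q2f x y z) P2 Q2 E2)|].
split; [exact: (z_unif (p1f x y z) (t2f x y z) (p2f x y z) (kf x y z) P1 T2 K2 E3 E4 ltac:(lra))|].
move=> u.
have ea : a = y + z by rewrite /y /z; field.
have eb : b = x + z by rewrite /x /z; field.
have ec : c = x + y by rewrite /x /y; field.
have := sum_id x y z u hx hy hz.
rewrite -ea -eb -ec => ->.
rewrite /x /y /z; field.
Qed.

Theorem mainTheorem6 (d : nat) (w : nat -> R) (A B C : nat -> bool) :
  (3 <= d)%nat ->
  (forall i, (i < d)%nat -> 0 < w i) ->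
  (* A, B, C partition {0,...,d-1}: each index lies in exactly one block *)
  (forall i, (i < d)%nat ->
     (A i = true /\ B i = false /\ C i = false) \/
     (A i = false /\ B i = true /\ C i = false) \/
     (A i = false /\ B i = false /\ C i = true)) ->
  (exists i, (i < d)%nat /\ A i = true) ->
  (exists i, (i < d)%nat /\ B i = true) ->
  (exists i, (i < d)%nat /\ C i = true) ->
  block_weight d w A + block_weight d w B + block_weight d w C >=
    2 * Rmax (block_weight d w A) (Rmax (block_weight d w B) (block_weight d w C)) ->
  exists (S : ProbSpace) (U : nat -> Omega S -> R),
    (forall i, (i < d)%nat -> uniform01 S (U i)) /\
    F S (fun x => fsum d (fun i => w i * U i x) = / 2 * fsum d w) /\
    P S (fun x => fsum d (fun i => w i * U i x) = / 2 * fsum d w) = 1.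
Proof.
move=> _ _ Hp _ _ _ Hm.
have [VA [VB [VC [HA [HB [HC Hs]]]]]] := choose_V _ _ _ Hm.
exact: (finish d w A B C VA VB VC Hp HA HB HC Hs).
Qed.
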